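(* Let $m\ge1$, $n\ge1$, $N>2n$. Let $\mathbf M_N$ be a symmetric positive definite $mN\times mN$ block-circulant matrix which is banded of bandwidth $n$, and let $\mathbf e=\{\mathbf e(t)\}_{t=1}^N$ be a stationary process on $\mathbb Z_N$ with covariance matrix $\mathbb E\,\mathbf e\mathbf e^\top=\mathbf M_N$. Then there is a unique process $\mathbf y$ solving $\mathbf M_N\mathbf y=\mathbf e$; it is a full rank stationary reciprocal process of order $n$ on $\mathbb Z_N$, it satisfies $\mathbb E\,\mathbf y\mathbf e^\top=I_{mN}$, and $\mathbf e$ is its normalized conjugate process, i.e. $\mathbf e(t)=\Delta^{-1}\mathbf d(t)$ where $\mathbf d(t)=\mathbf y(t)-\hat{\mathbb E}[\mathbf y(t)\mid\mathbf y(s),s\ne t]$ and $\Delta=\mathbb E\,\mathbf d(t)\mathbf d(t)^\top$.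
   Context: Processes are stacked as vectors in $\mathbb R^{mN}$, $\mathbf y=(\mathbf y(1)^\top,\dots,\mathbf y(N)^\top)^\top$. A matrix with $N\times N$ blocks of size $m\times m$ is block-circulant if its $(i,j)$ block depends only on $(i-j)\bmod N$, and banded of bandwidth $n$ if moreover its $(i,j)$ block is zero whenever $\min\{(i-j)\bmod N,(j-i)\bmod N\}>n$. A process on $\mathbb Z_N$ is a zero-mean second-order $\mathbb R^m$-valued process indexed by $t=1,\dots,N$ (indices mod $N$) whose covariance is symmetric block-circulant (it is then called stationary); full rank means positive definite covariance. $\hat{\mathbb E}[\cdot\mid\cdot]$ is orthogonal projection onto the closed linear span of the scalar components of the conditioning variables. Subspaces $\mathcal A,\mathcal B$ are conditionally orthogonal given $\mathcal C$ if $a-\hat{\mathbb E}[a\mid\mathcal C]$ and $b-\hat{\mathbb E}[b\mid\mathcal C]$ are uncorrelated for all $a\in\mathcal A,b\in\mathcal B$. The process is reciprocal of order $n$ if for every cyclic interval $(t_1,t_2)$ the variables $\{\mathbf y(t):t\in(t_1,t_2)\}$ are conditionally orthogonal to $\{\mathbf y(s):s\notin(t_1,t_2)\}$ given $\mathbf y(t_1-n+1),\dots,\mathbf y(t_1),\mathbf y(t_2),\dots,\mathbf y(t_2+n-1)$. *)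

(* Defs.v *)
From mathcomp Require Import all_boot all_order all_algebra.
From mathcomp Require Import all_classical all_reals all_analysis.
Set Implicit Arguments. Unset Strict Implicit. Unset Printing Implicit Defensive.
Import Order.TTheory GRing.Theory Num.Theory.
Local Open Scope ring_scope.

Section second_order_processes.
Context {d : measure_display} {T : measurableType d} {R : realType}
  (P : probability T R).

Definition cov (X Y : T -> R) : R := fine (covariance P X Y).

Definition second_order (X : T -> R) : Prop :=
  X \in Lfun P 2%:E /\ ('E_P[X] = 0)%E.

(* b belongs to the linear span of the variables {C i : i in A}
   (a finite family, so the span is already closed) *)
Definition in_span {I : finType} (C : I -> T -> R) (A : {set I}) (b : T -> R) :=
  exists c : I -> R, b = (fun w => \sum_(i in A) c i * C i w).

(* b is (a version of) the orthogonal projection  \hat E[a | C i, i in A] *)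
Definition is_proj {I : finType} (C : I -> T -> R) (A : {set I}) (a b : T -> R) :=
  in_span C A b /\ forall i, i \in A -> cov (a \- b) (C i) = 0.

Definition cond_orth {I : finType} (C : I -> T -> R) (A B D : {set I}) :=
  forall a b pa pb, in_span C A a -> in_span C B b ->
    is_proj C D a pa -> is_proj C D b pb -> cov (a \- pa) (b \- pb) = 0.

(* Processes on Z_N with values in R^m are stacked vectors of m*N scalar
   random variables; the a-th component of y(t) is y (mxvec_index t a),
   i.e. has index t*m + a. *)
Definition is_process (N m : nat) (y : 'I_(N * m) -> T -> R) :=
  forall i, second_order (y i).

Definition covmx (K : nat) (y z : 'I_K -> T -> R) : 'M[R]_K :=
  \matrix_(i, j) cov (y i) (z j).

End second_order_processes.

Section block_matrices.
Context {R : realType}.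

Definition block_circulant (N m : nat) (M : 'M[R]_(N * m)) :=
  forall (t s t' s' : 'I_N) (a b : 'I_m),
    ((t + N - s) %% N = (t' + N - s') %% N)%N ->
    M (mxvec_index t a) (mxvec_index s b) = M (mxvec_index t' a) (mxvec_index s' b).

Definition banded (N m n : nat) (M : 'M[R]_(N * m)) :=
  block_circulant M /\
  forall (t s : 'I_N) (a b : 'I_m),
    (n < minn ((t + N - s) %% N) ((s + N - t) %% N))%N ->
    M (mxvec_index t a) (mxvec_index s b) = 0.

Definition sym_posdef (K : nat) (A : 'M[R]_K) :=
  A^T = A /\ forall v : 'rV[R]_K, v != 0 -> 0 < (v *m A *m v^T) 0 0.

End block_matrices.

Section processes_on_ZN.
Context {d : measure_display} {T : measurableType d} {R : realType}
  (P : probability T R) (N m : nat).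

Definition stationary (y : 'I_(N * m) -> T -> R) :=
  is_process P y /\ (covmx P y y)^T = covmx P y y /\ block_circulant (covmx P y y).

Definition full_rank (y : 'I_(N * m) -> T -> R) := sym_posdef (covmx P y y).

Definition comps (S : {set 'I_N}) : {set 'I_(N * m)} :=
  [set mxvec_index t a | t in S, a in [set: 'I_m]].

Definition cyc_interior (t1 t2 : 'I_N) : {set 'I_N} :=
  [set t : 'I_N | (0 < (t + N - t1) %% N < (t2 + N - t1) %% N)%N].

Definition cyc_boundary (n : nat) (t1 t2 : 'I_N) : {set 'I_N} :=
  [set t : 'I_N | ((t1 + N - t) %% N < n)%N || ((t + N - t2) %% N < n)%N].

Definition reciprocal (n : nat) (y : 'I_(N * m) -> T -> R) :=
  forall t1 t2 : 'I_N,
    cond_orth P y (comps (cyc_interior t1 t2)) (comps (~: cyc_interior t1 t2))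
      (comps (cyc_boundary n t1 t2)).

Definition normalized_conjugate (y e : 'I_(N * m) -> T -> R) :=
  forall (t : 'I_N) (py : 'I_m -> T -> R),
    (forall a, is_proj P y (comps (~: [set t])) (y (mxvec_index t a)) (py a)) ->
    let dt := fun a => y (mxvec_index t a) \- py a in
    let Delta := \matrix_(a, b) cov P (dt a) (dt b) in
    Delta \in unitmx /\
    forall a, e (mxvec_index t a) = (fun w => \sum_b invmx Delta a b * dt b w).

Definition solves (M : 'M[R]_(N * m)) (y e : 'I_(N * m) -> T -> R) :=
  forall i, e i = (fun w => \sum_j M i j * y j w).

End processes_on_ZN.

(* Main.v *)
Require Import Defs.
From mathcomp Require Import all_boot all_order all_algebra.
From mathcomp Require Import all_classical all_reals all_analysis.
From mathcomp Require Import zify.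

Module PartA.
Import GRing.Theory Num.Theory.
Set Implicit Arguments. Unset Strict Implicit. Unset Printing Implicit Defensive.
Local Open Scope ring_scope.

Section L2.
Context {d : measure_display} {T : measurableType d} {R : realType}
  (P : probability T R).

Lemma Pfin : P setT \is a fin_num.
Proof. exact: fin_num_measure. Qed.

Lemma cov_fin (X Y : T -> R) : X \in Lfun P 2%:E -> Y \in Lfun P 2%:E ->
  covariance P X Y \is a fin_num.
Proof.
move=> hX hY; apply: covariance_fin_num.
- exact: (Lfun_subset12 Pfin).
- exact: (Lfun_subset12 Pfin).
- exact: Lfun2_mul_Lfun1.
Qed.

Lemma covC (X Y : T -> R) : cov P X Y = cov P Y X.
Proof. by rewrite /cov covarianceC. Qed.

Lemma covDl (X Y Z : T -> R) : X \in Lfun P 2%:E -> Y \in Lfun P 2%:E ->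
  Z \in Lfun P 2%:E -> cov P (X \+ Y) Z = cov P X Z + cov P Y Z.
Proof.
move=> hX hY hZ; rewrite /cov covarianceDl // fineD //; exact: cov_fin.
Qed.

Lemma covZl (a : R) (X Y : T -> R) : X \in Lfun P 2%:E -> Y \in Lfun P 2%:E ->
  cov P (fun w => a * X w) Y = a * cov P X Y.
Proof.
move=> hX hY; rewrite /cov.
have -> : (fun w => a * X w) = (a \o* X) by apply/funeqP => w; rewrite /GRing.mulr_fun mulrC.
rewrite covarianceZl //; first by rewrite fineM // cov_fin.
- exact: (Lfun_subset12 Pfin).
- exact: (Lfun_subset12 Pfin).
- exact: Lfun2_mul_Lfun1.
Qed.

Lemma L2_comb (I : Type) (r : seq I) (c : I -> R) (X : I -> T -> R) :
  (forall i, X i \in Lfun P 2%:E) ->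
  (fun w => \sum_(i <- r) c i * X i w) \in Lfun P 2%:E.
Proof.
move=> hX; elim: r => [|i r IH].
  have -> : (fun w => \sum_(i <- [::]) c i * X i w) = cst 0.
    by apply/funeqP => w; rewrite big_nil.
  exact: Lfun_cst.
have -> : (fun w => \sum_(j <- i :: r) c j * X j w) =
   (c i \o* X i) \+ (fun w => \sum_(j <- r) c j * X j w).
  by apply/funeqP => w; rewrite big_cons /= /GRing.mulr_fun mulrC.
apply: rpredD => //; first by rewrite lee_fin ler1n.
move=> ?; apply: Lfun_scale => //; by rewrite ler1n.
Qed.

Lemma cov_combl (I : Type) (r : seq I) (c : I -> R) (X : I -> T -> R) Y :
  (forall i, X i \in Lfun P 2%:E) -> Y \in Lfun P 2%:E ->
  cov P (fun w => \sum_(i <- r) c i * X i w) Y = \sum_(i <- r) c i * cov P (X i) Y.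
Proof.
move=> hX hY; elim: r => [|i r IH].
  have -> : (fun w => \sum_(i <- [::]) c i * X i w) = cst 0.
    by apply/funeqP => w; rewrite big_nil.
  by rewrite big_nil /cov covariance_cst_l.
have -> : (fun w => \sum_(j <- i :: r) c j * X j w) =
   (fun w => c i * X i w) \+ (fun w => \sum_(j <- r) c j * X j w).
  by apply/funeqP => w; rewrite big_cons.
rewrite covDl // ?L2_comb // ?covZl // ?IH ?big_cons //.
have -> : (fun w => c i * X i w) = c i \o* X i by apply/funeqP => w; rewrite /GRing.mulr_fun mulrC.
by rewrite Lfun_scale // ler1n.
Qed.

Lemma E_comb (I : Type) (r : seq I) (c : I -> R) (X : I -> T -> R) :
  (forall i, second_order P (X i)) ->
  ('E_P[(fun w => \sum_(i <- r) c i * X i w)%R] = 0)%E.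
Proof.
move=> hX; elim: r => [|i r IH].
  have -> : (fun w => \sum_(i <- [::]) c i * X i w) = cst 0.
    by apply/funeqP => w; rewrite big_nil.
  by rewrite expectation_cst.
have -> : (fun w => \sum_(j <- i :: r) c j * X j w) =
   (c i \o* X i) \+ (fun w => \sum_(j <- r) c j * X j w).
  by apply/funeqP => w; rewrite big_cons /= /GRing.mulr_fun mulrC.
have h2 : forall j, X j \in Lfun P 2%:E by move=> j; case: (hX j).
rewrite expectationD ?IH ?expectationZl ?(proj2 (hX i)) ?mule0 ?adde0 //.
- exact: (Lfun_subset12 Pfin).
- by apply: (Lfun_subset12 Pfin); rewrite Lfun_scale // ler1n.
- by apply: (Lfun_subset12 Pfin); apply: L2_comb.
Qed.

End L2.

End PartA.
Import PartA.

Module PartB.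
Import Order.TTheory GRing.Theory Num.Theory.
Set Implicit Arguments. Unset Strict Implicit. Unset Printing Implicit Defensive.
Local Open Scope ring_scope.

Section L2b.
Context {d : measure_display} {T : measurableType d} {R : realType}
  (P : probability T R).
Lemma cov_combr (I : Type) (r : seq I) (c : I -> R) (X : I -> T -> R) Y :
  (forall i, X i \in Lfun P 2%:E) -> Y \in Lfun P 2%:E ->
  cov P Y (fun w => \sum_(i <- r) c i * X i w) = \sum_(i <- r) c i * cov P Y (X i).
Proof.
move=> hX hY; rewrite covC cov_combl //; apply: eq_bigr => i _; by rewrite covC.
Qed.
End L2b.

Section Lin.
Context {d : measure_display} {T : measurableType d} {R : realType}
  (P : probability T R) (K : nat) (e : 'I_K -> T -> R) (M : 'M[R]_K).
Hypothesis soe : forall i, second_order P (e i).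
Hypothesis covE : forall i j, cov P (e i) (e j) = M i j.

Definition lin (v : 'rV[R]_K) : T -> R := fun w => \sum_i v 0 i * e i w.

Lemma eL2 i : e i \in Lfun P 2%:E. Proof. by case: (soe i). Qed.

Lemma lin_L2 v : lin v \in Lfun P 2%:E.
Proof. apply: L2_comb; exact: eL2. Qed.

Lemma lin_so v : second_order P (lin v).
Proof. split; [exact: lin_L2 | exact: E_comb]. Qed.

Lemma cov_lin u v : cov P (lin u) (lin v) = (u *m M *m v^T) 0 0.
Proof.
have h i : cov P (e i) (lin v) = \sum_j v 0 j * M i j.
  rewrite /lin cov_combr; [|exact: eL2|exact: eL2].
  by apply: eq_bigr => j _; rewrite covE.
rewrite {1}/lin cov_combl; [|exact: eL2|exact: lin_L2].
under eq_bigr => i _ do rewrite h.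
rewrite mxE; under [RHS]eq_bigr => j _ do rewrite !mxE big_distrl /=.
rewrite exchange_big /=; apply: eq_bigr => i _; rewrite big_distrr /=.
apply: eq_bigr => j _; by rewrite -mulrA [v 0 j * M i j]mulrC.
Qed.

Lemma lin_comb (p : nat) (c : 'rV[R]_p) (A : 'M[R]_(p, K)) :
  (fun w => \sum_i c 0 i * lin (row i A) w) = lin (c *m A).
Proof.
apply/funeqP => w; rewrite /lin.
under eq_bigr => i _ do rewrite big_distrr /=.
rewrite exchange_big /=; apply: eq_bigr => j _.
rewrite !mxE big_distrl /=; apply: eq_bigr => i _; by rewrite mxE mulrA.
Qed.

Lemma lin_e i : lin (row i 1%:M) = e i.
Proof.
apply/funeqP => w; rewrite /lin (bigD1 i) //= mxE mxE eqxx mul1r big1 ?addr0 //.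
by move=> j /negbTE ji; rewrite !mxE eq_sym ji mul0r.
Qed.

Lemma lin_sub u v : lin u \- lin v = lin (u - v).
Proof.
apply/funeqP => w; rewrite /lin /= -sumrB; apply: eq_bigr => i _.
by rewrite !mxE mulrBl.
Qed.

End Lin.

Lemma posdef_supp {R : realType} K (A : 'M[R]_K) (S : {set 'I_K}) (v : 'rV[R]_K) :
  sym_posdef A -> (forall i, i \notin S -> v 0 i = 0) ->
  (forall j, j \in S -> (v *m A) 0 j = 0) -> v = 0.
Proof.
move=> [_ pd] hv hA; apply/eqP; apply: contraT => nz.
have := pd v nz; rewrite mxE big1 ?ltxx //.
move=> j _; rewrite [v^T _ _]mxE; case: (boolP (j \in S)) => h.
  by rewrite hA // mul0r.
by rewrite hv // mulr0.
Qed.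

Lemma posdef_unit {R : realType} K (A : 'M[R]_K) : sym_posdef A -> A \in unitmx.
Proof.
move=> pd; rewrite -row_free_unit; apply: inj_row_free => v hv.
apply: (@posdef_supp _ _ A [set i : 'I_K | true]) => // [i|j _]; first by rewrite inE.
by rewrite hv mxE.
Qed.

End PartB.
Import PartB.

Module PartC.
Import Order.TTheory GRing.Theory Num.Theory.
Set Implicit Arguments. Unset Strict Implicit. Unset Printing Implicit Defensive.
Local Open Scope ring_scope.

Section Main.
Context {d : measure_display} {T : measurableType d} {R : realType}
  (P : probability T R) (K : nat) (e : 'I_K -> T -> R) (M : 'M[R]_K).
Hypothesis soe : forall i, second_order P (e i).
Hypothesis covE : forall i j, cov P (e i) (e j) = M i j.
Hypothesis Mpd : sym_posdef M.

Let Munit : M \in unitmx. Proof. exact: posdef_unit. Qed.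
Let Msym : M^T = M. Proof. by case: Mpd. Qed.
Definition Minv := invmx M.
Lemma MinvSym : Minv^T = Minv.
Proof. by rewrite /Minv trmx_inv Msym. Qed.

Lemma MinvPD : sym_posdef Minv.
Proof.
split; first exact: MinvSym.
move=> v nz; set u := v *m Minv.
have hv : v = u *m M by rewrite /u /Minv mulmxKV.
have unz : u != 0.
  apply: contra nz => /eqP u0; by rewrite hv u0 mul0mx.
have -> : v *m Minv *m v^T = u *m M *m u^T.
  by rewrite -/u {1}hv trmx_mul Msym mulmxA.
by case: Mpd => _ pd; apply: pd.
Qed.

Definition yy (i : 'I_K) := lin e (row i Minv).

Lemma covy (w : 'rV[R]_K) i : cov P (lin e w) (yy i) = w 0 i.
Proof.
rewrite /yy (cov_lin soe covE) tr_row MinvSym colE !mulmxA -(mulmxA w) /Minv.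
by rewrite mulmxV // mulmx1 -colE mxE.
Qed.

Lemma span_lin (A : {set 'I_K}) f : in_span yy A f ->
  exists g : 'rV[R]_K, (forall i, i \notin A -> g 0 i = 0) /\ f = lin e (g *m Minv).
Proof.
case=> c ->; exists (\row_i (if i \in A then c i else 0)); split.
  by move=> i hi; rewrite mxE (negbTE hi).
rewrite -lin_comb; apply/funeqP => w; rewrite big_mkcond /=; apply: eq_bigr => i _.
by rewrite mxE; case: ifP => _ //; rewrite mul0r.
Qed.

Lemma lin_span (A : {set 'I_K}) (g : 'rV[R]_K) :
  (forall i, i \notin A -> g 0 i = 0) -> in_span yy A (lin e (g *m Minv)).
Proof.
move=> hg; exists (fun i => g 0 i).
rewrite -lin_comb; apply/funeqP => w; rewrite [RHS]big_mkcond /=; apply: eq_bigr => i _.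
by case: ifP => // /negbT /hg ->; rewrite mul0r.
Qed.

Lemma proj_coef (A : {set 'I_K}) (w : 'rV[R]_K) p : is_proj P yy A (lin e w) p ->
  exists g : 'rV[R]_K, [/\ (forall i, i \notin A -> g 0 i = 0), p = lin e (g *m Minv)
    & forall i, i \in A -> (g *m Minv) 0 i = w 0 i].
Proof.
case=> /span_lin [g [hg ->]] ho; exists g; split => // i iA.
have := ho i iA; rewrite lin_sub covy => /eqP; rewrite [X in X == 0]mxE [X in _ + X]mxE subr_eq0 => /eqP ->.
by [].
Qed.

Lemma proj_uniq (A : {set 'I_K}) (w : 'rV[R]_K) p q :
  is_proj P yy A (lin e w) p -> is_proj P yy A (lin e w) q -> p = q.
Proof.
move=> /proj_coef [g [hg -> hgw]] /proj_coef [h [hh -> hhw]].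
suff : g - h = 0 by move/eqP; rewrite subr_eq0 => /eqP ->.
apply: (posdef_supp (S := A) MinvPD).
  by move=> i iA; rewrite !mxE hg // hh // subrr.
by move=> j jA; rewrite mulmxBl [LHS]mxE [X in _ + X]mxE hgw // hhw // subrr.
Qed.

Lemma covyy : covmx P yy yy = Minv.
Proof. apply/matrixP => i j; by rewrite mxE covy mxE. Qed.

Lemma covye : covmx P yy e = 1%:M.
Proof.
apply/matrixP => i j; rewrite mxE covC -lin_e // covy !mxE.
by rewrite eq_sym.
Qed.

Lemma yy_so i : second_order P (yy i).
Proof. exact: lin_so. Qed.

Lemma solves_yy : forall i, e i = (fun w => \sum_j M i j * yy j w).
Proof.
move=> i; have := lin_comb e (row i M) Minv.
rewrite -row_mul /Minv mulmxV // lin_e // => <-.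
by apply/funeqP => w; apply: eq_bigr => j _; rewrite mxE.
Qed.

Lemma uniq_yy (y' : 'I_K -> T -> R) : (forall i, e i = (fun w => \sum_j M i j * y' j w)) ->
  y' = yy.
Proof.
move=> hs; apply/funext => i; apply/funeqP => w.
rewrite /yy /lin; under [RHS]eq_bigr => j _ do rewrite hs big_distrr /=.
rewrite exchange_big /=; symmetry.
transitivity (\sum_k (row i Minv *m M) 0 k * y' k w).
  apply: eq_bigr => k _; rewrite mxE big_distrl /=; apply: eq_bigr => j _; by rewrite mulrA.
rewrite -row_mul /Minv mulVmx // (bigD1 i) //= big1 ?addr0; first by rewrite !mxE eqxx mul1r.
by move=> k /negbTE ki; rewrite !mxE eq_sym ki mul0r.
Qed.

End Main.

End PartC.
Import PartC.

Module PartD.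
Import Order.TTheory GRing.Theory Num.Theory.
Set Implicit Arguments. Unset Strict Implicit. Unset Printing Implicit Defensive.

Lemma modsub (x y N : nat) : (x < N)%N -> (y < N)%N ->
  ((x + N - y) %% N = if (y <= x)%N then x - y else x + N - y)%N.
Proof.
move=> hx hy; case: (leqP y x) => h.
  by rewrite -addnBAC // modnDr modn_small // (leq_ltn_trans (leq_subr _ _) hx).
by rewrite modn_small //; lia.
Qed.

Lemma modadd (x k N : nat) : (x < N)%N -> (k < N)%N ->
  ((x + k) %% N = if (x + k < N)%N then x + k else x + k - N)%N.
Proof.
move=> hx hk; case: (ltnP (x + k) N) => h; first by rewrite modn_small.
have -> : (x + k = (x + k - N) + N)%N by lia.
by rewrite modnDr modn_small //; lia.
Qed.

Lemma modsubP (x y N : nat) : (x < N)%N -> (y < N)%N ->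
  ((x + N - y) %% N < N /\ ((x + N - y) %% N + y = x \/ (x + N - y) %% N + y = x + N))%N.
Proof. move=> hx hy; rewrite modsub //; case: (leqP y x) => h; lia. Qed.

Lemma arith_band (N n t1 t2 t s : nat) : (1 <= n)%N ->
  (t1 < N)%N -> (t2 < N)%N -> (t < N)%N -> (s < N)%N ->
  (0 < (t + N - t1) %% N < (t2 + N - t1) %% N)%N ->
  ~~ (((t1 + N - t) %% N < n) || ((t + N - t2) %% N < n))%N ->
  ~~ (0 < (s + N - t1) %% N < (t2 + N - t1) %% N)%N ->
  ~~ (((t1 + N - s) %% N < n) || ((s + N - t2) %% N < n))%N ->
  (n < minn ((t + N - s) %% N) ((s + N - t) %% N))%N.
Proof.
move=> hn h1 h2 ht hs.
have := modsubP ht h1; have := modsubP h2 h1; have := modsubP h1 ht;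
have := modsubP ht h2; have := modsubP hs h1; have := modsubP h1 hs;
have := modsubP hs h2; have := modsubP ht hs; have := modsubP hs ht.
move: ((t + N - t1) %% N)%N ((t2 + N - t1) %% N)%N ((t1 + N - t) %% N)%N
  ((t + N - t2) %% N)%N ((s + N - t1) %% N)%N ((t1 + N - s) %% N)%N
  ((s + N - t2) %% N)%N ((t + N - s) %% N)%N ((s + N - t) %% N)%N.
move=> *; lia.
Qed.

Section Recip.
Context {d : measure_display} {T : measurableType d} {R : realType}
  (P : probability T R) (K : nat) (e : 'I_K -> T -> R) (M : 'M[R]_K).
Hypothesis soe : forall i, second_order P (e i).
Hypothesis covE : forall i j, cov P (e i) (e j) = M i j.
Hypothesis Mpd : sym_posdef M.
Local Open Scope ring_scope.

Let Munit : M \in unitmx. Proof. exact: posdef_unit. Qed.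

Lemma supp_lem (X D : {set 'I_K}) (x : 'rV[R]_K) :
  (forall i j, i \in X -> i \notin D -> j \notin X -> j \notin D -> M i j = 0) ->
  (forall i, i \in D -> x 0 i = 0) ->
  (forall j, j \notin X -> j \notin D -> (x *m M) 0 j = 0) ->
  forall i, i \notin X -> x 0 i = 0.
Proof.
move=> hb hD hM.
set xB := \row_i (if i \in X then 0 else x 0 i).
have hxB : xB = 0.
  apply: (posdef_supp (S := ~: X :&: ~: D) Mpd).
    move=> i; rewrite !inE negb_and !negbK => /orP [iX | iD]; rewrite mxE ?iX //.
    by case: ifP => // _; exact: hD.
  move=> j; rewrite !inE => /andP [jX jD].
  transitivity ((x *m M) 0 j); last exact: hM.
  rewrite !mxE; apply: eq_bigr => i _; rewrite mxE.
  case: ifP => iX //; case: (boolP (i \in D)) => iD; first by rewrite hD // !mul0r.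
  by rewrite (hb i j) // !mulr0.
move=> i iX; have := congr1 (fun v : 'rV[R]_K => v 0 i) hxB.
by rewrite /= !mxE (negbTE iX).
Qed.

Lemma recip_gen (I D : {set 'I_K}) a b pa pb :
  (forall i j, i \in I -> i \notin D -> j \notin I -> j \notin D -> M i j = 0 /\ M j i = 0) ->
  in_span (yy e M) I a -> in_span (yy e M) (~: I) b ->
  is_proj P (yy e M) D a pa -> is_proj P (yy e M) D b pb -> cov P (a \- pa) (b \- pb) = 0.
Proof.
move=> hb hA hB hpa hpb.
case/span_lin: hA => al [hal Ea]; subst a.
case/span_lin: hB => be [hbe Eb]; subst b.
case/(proj_coef soe covE Mpd): hpa => g [hg -> hgw].
case/(proj_coef soe covE Mpd): hpb => h [hh -> hhw].
rewrite !lin_sub (cov_lin soe covE).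
set x := al *m Minv M - g *m Minv M.
set z := be *m Minv M - h *m Minv M.
have xD i : i \in D -> x 0 i = 0.
  by move=> iD; rewrite /x [LHS]mxE [X in _ + X]mxE hgw // subrr.
have zD i : i \in D -> z 0 i = 0.
  by move=> iD; rewrite /z [LHS]mxE [X in _ + X]mxE hhw // subrr.
have xM : x *m M = al - g by rewrite /x -mulmxBl /Minv mulmxKV.
have zM : z *m M = be - h by rewrite /z -mulmxBl /Minv mulmxKV.
clearbody x z.
have xout : forall i, i \notin I -> x 0 i = 0.
  apply: (supp_lem (D := D)) => //.
    by move=> i j iI iD jI jD; case: (hb i j iI iD jI jD).
  by move=> j jI jD; rewrite xM !mxE hal // hg // subrr.
have zout : forall i, i \notin ~: I -> z 0 i = 0.
  apply: (supp_lem (D := D)) => //.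
    by move=> i j iI iD jI jD; move: iI jI; rewrite !inE negbK => iI jI;
      case: (hb j i jI jD iI iD).
  by move=> j jI jD; rewrite zM !mxE hbe // hh // subrr.
rewrite mxE big1 // => j _; rewrite mxE big_distrl big1 //= => i _; rewrite mxE.
case: (boolP (i \in I)) => iI; last by rewrite xout // !mul0r.
case: (boolP (i \in D)) => iD; first by rewrite xD // !mul0r.
case: (boolP (j \in I)) => jI; first by rewrite zout ?inE ?jI // mulr0.
case: (boolP (j \in D)) => jD; first by rewrite zD // mulr0.
by rewrite (proj1 (hb i j iI iD jI jD)) mulr0 mul0r.
Qed.

End Recip.

End PartD.
Import PartD.

Module PartE.
Import Order.TTheory GRing.Theory Num.Theory.
Set Implicit Arguments. Unset Strict Implicit. Unset Printing Implicit Defensive.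

Section Index.
Variables N m : nat.

Definition unpair (k : 'I_(N * m)) : 'I_N * 'I_m :=
  enum_val (cast_ord (esym (mxvec_cast N m)) k).

Lemma unpairK t a : unpair (mxvec_index t a) = (t, a).
Proof. by rewrite /unpair /mxvec_index cast_ordK enum_rankK. Qed.

Lemma idx_inj t a t' a' : mxvec_index t a = mxvec_index t' a' :> 'I_(N * m) ->
  t = t' /\ a = a'.
Proof. by move=> /(congr1 unpair); rewrite !unpairK => -[-> ->]. Qed.

Lemma in_comps (S : {set 'I_N}) t a : (mxvec_index t a \in comps m S) = (t \in S).
Proof.
apply/imset2P/idP => [[t' a' ht' _ /idx_inj [-> _]] // | ht].
by exists t a => //; rewrite inE.
Qed.

Lemma comps_compl (S : {set 'I_N}) : comps m (~: S) = ~: comps m S.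
Proof.
apply/setP => k; case/mxvec_indexP: k => t a.
by rewrite inE !in_comps inE.
Qed.
End Index.

Lemma band_comps {R : realType} N m n (M : 'M[R]_(N * m)) (t1 t2 : 'I_N) :
  (1 <= n)%N -> banded n M -> forall i j,
  i \in comps m (cyc_interior t1 t2) -> i \notin comps m (cyc_boundary n t1 t2) ->
  j \notin comps m (cyc_interior t1 t2) -> j \notin comps m (cyc_boundary n t1 t2) ->
  (M i j = 0 /\ M j i = 0)%R.
Proof.
move=> hn [_ hb] i j; case/mxvec_indexP: i => t a; case/mxvec_indexP: j => s b.
rewrite !in_comps !inE => hi hib hj hjb.
have := arith_band hn (ltn_ord t1) (ltn_ord t2) (ltn_ord t) (ltn_ord s) hi hib hj hjb.
move=> h; split; apply: hb => //; by rewrite minnC.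
Qed.

End PartE.
Import PartE.

Module PartF.
Import Order.TTheory GRing.Theory Num.Theory.
Set Implicit Arguments. Unset Strict Implicit. Unset Printing Implicit Defensive.

Lemma arith_shift (N t s k : nat) : (0 < N)%N -> (t < N)%N -> (s < N)%N ->
  (((t + k) %% N + N - (s + k) %% N) %% N = (t + N - s) %% N)%N.
Proof.
move=> hN ht hs; apply/eqP; rewrite -(eqn_modDr (s + k)).
rewrite -modnDmr subnK; last by apply: (leq_trans (ltnW (ltn_pmod _ hN))); lia.
rewrite modnDr modn_mod.
have -> : (t + N - s + (s + k) = t + k + N)%N by lia.
by rewrite modnDr.
Qed.

Lemma arith_shift2 (N t s t' s' : nat) : (t < N)%N -> (s < N)%N -> (t' < N)%N -> (s' < N)%N ->
  ((t + N - s) %% N = (t' + N - s') %% N)%N -> ((s + (t' + N - t)) %% N = s')%N.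
Proof.
move=> ht hs ht' hs' h.
have H : (s + (t' + N - t) = s' \/ s + (t' + N - t) = s' + N \/ s + (t' + N - t) = s' + N + N)%N.
  move: h; rewrite !modsub //; case: (leqP s t); case: (leqP s' t'); lia.
by case: H => [|[]] ->; rewrite ?modnDr modn_small.
Qed.

Section Circ.
Context {R : realType} (N m : nat) (hN : (0 < N)%N) (M : 'M[R]_(N * m)).
Hypothesis Munit : M \in unitmx.
Hypothesis Mcirc : block_circulant M.

Definition shiftk (k : nat) (t : 'I_N) : 'I_N := Ordinal (ltn_pmod (t + k) hN).
Definition sig k (i : 'I_(N * m)) := mxvec_index (shiftk k (unpair i).1) (unpair i).2.

Lemma sigE k t a : sig k (mxvec_index t a) = mxvec_index (shiftk k t) a.
Proof. by rewrite /sig unpairK. Qed.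

Lemma sig_inj k : injective (sig k).
Proof.
move=> i j; case/mxvec_indexP: i => t a; case/mxvec_indexP: j => s b.
rewrite !sigE => /idx_inj [h ->].
suff -> : t = s by [].
apply/val_inj; move: h => /(congr1 val) /= /eqP.
by rewrite eqn_modDr !modn_small // => /eqP.
Qed.

Lemma M_sig k i j : M (sig k i) (sig k j) = M i j.
Proof.
case/mxvec_indexP: i => t a; case/mxvec_indexP: j => s b; rewrite !sigE.
by apply: Mcirc; rewrite /= arith_shift.
Qed.

Local Open Scope ring_scope.
Lemma entry_delta p q (W : 'M[R]_(p, q)) a b :
  ((delta_mx 0 a : 'M[R]_(1, p)) *m W *m (delta_mx b 0 : 'M[R]_(q, 1))) 0 0 = W a b.
Proof. by rewrite -rowE -colE !mxE. Qed.

Lemma Minv_sig k i j : invmx M (sig k i) (sig k j) = invmx M i j.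
Proof.
set A := \matrix_(i, j) invmx M (sig k i) (sig k j).
have hA : A *m M = 1%:M.
  apply/matrixP => i' j'; rewrite mxE.
  transitivity (\sum_l invmx M (sig k i') l * M l (sig k j')).
    rewrite [RHS](reindex_inj (sig_inj (k:=k))) /=.
    by apply: eq_bigr => l _; rewrite mxE M_sig.
  have := congr1 (fun X : 'M[R]_(N * m) => X (sig k i') (sig k j')) (mulVmx Munit).
  by rewrite mxE /= => ->; rewrite !mxE (inj_eq (sig_inj (k:=k))).
have hAM : A = invmx M.
  by rewrite -[A]mulmx1 -(mulmxV Munit) mulmxA hA mul1mx.
by have := congr1 (fun X : 'M[R]_(N * m) => X i j) hAM; rewrite mxE.
Qed.

Lemma Minv_circ : block_circulant (invmx M).
Proof.
move=> t s t' s' a b h.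
set k := (t' + N - t)%N.
have e1 : shiftk k t = t'.
  apply/val_inj => /=; rewrite /k.
  have -> : (t + (t' + N - t) = t' + N)%N by have := ltn_ord t; lia.
  by rewrite modnDr modn_small.
have e2 : shiftk k s = s'.
  by apply/val_inj => /=; rewrite /k; apply: arith_shift2.
by rewrite -e1 -e2 -!sigE Minv_sig.
Qed.
End Circ.

End PartF.
Import PartF.

Module PartG.
Import Order.TTheory GRing.Theory Num.Theory.
Set Implicit Arguments. Unset Strict Implicit. Unset Printing Implicit Defensive.
Local Open Scope ring_scope.

Section NC.
Context {d : measure_display} {T : measurableType d} {R : realType}
  (P : probability T R) (N m : nat) (e : 'I_(N * m) -> T -> R) (M : 'M[R]_(N * m)).
Hypothesis soe : forall i, second_order P (e i).
Hypothesis covE : forall i j, cov P (e i) (e j) = M i j.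
Hypothesis Mpd : sym_posdef M.

Let Munit : M \in unitmx. Proof. exact: posdef_unit. Qed.
Let Msym : M^T = M. Proof. by case: Mpd. Qed.

Variable t : 'I_N.

Let idx_t_inj : injective (@mxvec_index N m t).
Proof. by move=> a b /idx_inj []. Qed.

Definition Et : 'M[R]_(m, N * m) := \matrix_(a, i) (i == mxvec_index t a)%:R.

Lemma EtE : Et *m Et^T = 1%:M.
Proof.
apply/matrixP => a b; rewrite mxE (bigD1 (mxvec_index t a)) //= !mxE eqxx mul1r.
rewrite big1 ?addr0; first by rewrite (inj_eq idx_t_inj).
by move=> i /negbTE hi; rewrite !mxE hi mul0r.
Qed.

Lemma row_EtT (x : 'rV[R]_(N * m)) a : (x *m Et^T) 0 a = x 0 (mxvec_index t a).
Proof.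
rewrite mxE (bigD1 (mxvec_index t a)) //= !mxE eqxx mulr1 big1 ?addr0 //.
by move=> i /negbTE hi; rewrite !mxE hi mulr0.
Qed.

Lemma Et_off (v : 'rV[R]_m) i : i \in comps m (~: [set t]) -> (v *m Et) 0 i = 0.
Proof.
case/mxvec_indexP: i => s b; rewrite in_comps !inE => st.
rewrite mxE big1 // => a _; rewrite mxE.
case: eqP => [/idx_inj [hs _]|_]; last by rewrite mulr0.
by rewrite hs eqxx in st.
Qed.

Definition Mtt := Et *m M *m Et^T.

Lemma Mtt_sym : Mtt^T = Mtt.
Proof. by rewrite /Mtt !trmx_mul trmxK Msym mulmxA. Qed.

Lemma Mtt_unit : Mtt \in unitmx.
Proof.
rewrite -row_free_unit; apply: inj_row_free => w hw.
have hV : w *m Et = 0.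
  apply: (posdef_supp (S := comps m [set t]) Mpd).
    move=> i hi; apply: Et_off; by rewrite comps_compl inE.
  case/mxvec_indexP => s b; rewrite in_comps inE => /eqP ->.
  by rewrite -row_EtT -!mulmxA (mulmxA Et) -/Mtt hw mxE.
by rewrite -[w]mulmx1 -EtE mulmxA hV mul0mx.
Qed.

Definition U := invmx Mtt *m Et.

Definition qq a := lin e (row (mxvec_index t a) (Minv M) - row a U).

Lemma proj_q a : is_proj P (yy e M) (comps m (~: [set t])) (yy e M (mxvec_index t a)) (qq a).
Proof.
split.
  set g := (row (mxvec_index t a) (Minv M) - row a U) *m M.
  have -> : qq a = lin e (g *m Minv M) by rewrite /g /Minv mulmxK.
  apply: lin_span => i; rewrite comps_compl inE negbK.
  case/mxvec_indexP: i => s b; rewrite in_comps inE => /eqP ->.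
  have h1 : row (mxvec_index t a) (Minv M) *m M *m Et^T = row (mxvec_index t a) Et^T.
    by rewrite -!row_mul /Minv mulVmx // mul1mx.
  have h2 : row a U *m M *m Et^T = row a 1%:M.
    by rewrite -!row_mul /U -!mulmxA (mulmxA Et) -/Mtt mulVmx // Mtt_unit.
  by rewrite /g -row_EtT !mulmxBl h1 h2 !mxE (inj_eq idx_t_inj) subrr.
move=> i hi; rewrite /yy lin_sub.
have -> : row (mxvec_index t a) (Minv M) - (row (mxvec_index t a) (Minv M) - row a U) = row a U.
  by rewrite opprB addrC subrK.
by rewrite (covy soe covE Mpd) /U row_mul Et_off.
Qed.

End NC.

Lemma row_tr_row {R : realType} p q r (X : 'M[R]_(p, q)) (Y : 'M[R]_q) (Z : 'M[R]_(r, q)) a b :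
  (row a X *m Y *m (row b Z)^T) 0 0 = (X *m Y *m Z^T) a b.
Proof.
rewrite tr_row colE mulmxA -colE -!row_mul.
by rewrite [col _ _ _ _]mxE [row _ _ _ _]mxE.
Qed.

Section NC2.
Context {d : measure_display} {T : measurableType d} {R : realType}
  (P : probability T R) (N m : nat) (e : 'I_(N * m) -> T -> R) (M : 'M[R]_(N * m)).
Hypothesis soe : forall i, second_order P (e i).
Hypothesis covE : forall i j, cov P (e i) (e j) = M i j.
Hypothesis Mpd : sym_posdef M.

Lemma nc : normalized_conjugate P (yy e M) e.
Proof.
move=> t py Hpy dt Delta.
have hpy a : py a = qq e M t a.
  apply: (proj_uniq soe covE Mpd (Hpy a)); exact: (proj_q soe covE Mpd t a).
have hdt a : dt a = lin e (row a (U M t)).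
  rewrite /dt hpy /qq /yy lin_sub; congr (lin e _).
  by rewrite opprB addrC subrK.
have h1 : invmx (Mtt M t) *m Et m t *m M *m (Et m t)^T = 1%:M.
  by rewrite -!mulmxA (mulmxA (Et m t)) -/(Mtt M t) mulVmx // (Mtt_unit Mpd t).
have hD : Delta = (invmx (Mtt M t))^T.
  apply/matrixP => a b; rewrite /Delta mxE !hdt (cov_lin soe covE) row_tr_row.
  by rewrite /U trmx_mul !mulmxA h1 mul1mx.
split; first by rewrite hD unitmx_tr unitmx_inv (Mtt_unit Mpd t).
move=> a; rewrite hD -trmx_inv invmxK (Mtt_sym Mpd t).
transitivity (fun w => \sum_b (row a (Mtt M t)) 0 b * lin e (row b (U M t)) w); last first.
  by apply/funeqP => w; apply: eq_bigr => b _; rewrite mxE hdt.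
rewrite (lin_comb e (row a (Mtt M t)) (U M t)) -row_mul /U mulmxA mulmxV ?(Mtt_unit Mpd t) // mul1mx.
apply/funeqP => w; rewrite /lin (bigD1 (mxvec_index t a)) //= !mxE eqxx mul1r big1 ?addr0 //.
by move=> i /negbTE hi; rewrite !mxE hi mul0r.
Qed.
End NC2.

End PartG.
Import PartG.

Import GRing.Theory Num.Theory.
Local Open Scope ring_scope.

Theorem theorem2 (d : measure_display) (T : measurableType d) (R : realType)
  (P : probability T R) (m n N : nat)
  (hm : (1 <= m)%N) (hn : (1 <= n)%N) (hN : (2 * n < N)%N)
  (M : 'M[R]_(N * m)) (e : 'I_(N * m) -> T -> R) :
  sym_posdef M -> banded n M ->
  stationary P e -> covmx P e e = M ->
  exists y : 'I_(N * m) -> T -> R,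
    [/\ is_process P y /\ solves M y e,
        (forall y' : 'I_(N * m) -> T -> R,
            is_process P y' -> solves M y' e -> y' = y),
        stationary P y /\ full_rank P y /\ reciprocal P n y,
        covmx P y e = 1%:M
      & normalized_conjugate P y e].
Proof.
move=> Mpd Mband se hcov.
have soe : forall i, second_order P (e i) by case: se.
have covE : forall i j, cov P (e i) (e j) = M i j by move=> i j; rewrite -hcov mxE.
have hN0 : (0 < N)%N by lia.
have yso : is_process P (yy e M) by move=> i; exact: yy_so.
exists (yy e M); split.
- split => //; exact: solves_yy.
- by move=> y' _ hs; exact: uniq_yy.
- split; last split.
  + split => //; rewrite (covyy soe covE Mpd); split; first exact: MinvSym.
    exact: (Minv_circ hN0 (posdef_unit Mpd) (proj1 Mband)).
  + by rewrite /full_rank (covyy soe covE Mpd); exact: MinvPD.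
  + move=> t1 t2 a b pa pb ha hb hpa hpb; rewrite comps_compl in hb.
    apply: (recip_gen soe covE Mpd _ ha hb hpa hpb) => i j.
    exact: band_comps.
- exact: (covye soe covE Mpd).
- exact: nc.
Qed.
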